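(* Let $m,n\in\mathbf{N}$ and let $\nu$ be a partition of $n-1$ with at most $m$ parts. Then there is a unique set family of shape $(m^n)$ and type $(m^n)\star\nu$.
   Context: A set family of shape $(m^n)$ is a collection of $n$ distinct $m$-subsets of $\mathbf{N}$; it has type $\lambda$ (largest part $a$, conjugate $\lambda'$) if for each $i\in\{1,\dots,a\}$ exactly $\lambda'_i$ of its sets contain $i$. For a partition $\nu$ of $n-1$ with $k\le m$ parts, $(m^n)\star\nu$ is the partition obtained from the Young diagram of $(m^n)$ by, for each $i$ with $1\le i\le k$, deleting $\nu_i$ boxes (from the bottom) of column $m+1-i$ and adding $\nu_i$ boxes to the end of row $i$. *)

(* Defs.v *)
From HB Require Import structures.
From mathcomp Require Import all_boot.
From mathcomp Require Import finmap.
Set Implicit Arguments. Unset Strict Implicit. Unset Printing Implicit Defensive.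


Definition is_partition_of (k : nat) (nu : seq nat) : bool :=
  [&& sorted geq nu, all (fun x => 0 < x) nu & sumn nu == k].

Definition largest_part (la : seq nat) : nat := \max_(x <- la) x.
(* conjugate part lambda'_i (1-indexed): number of parts >= i *)
Definition conj_part (la : seq nat) (i : nat) : nat := count (fun x => i <= x) la.

(* ---------- Young diagrams as lists of cells (row, column), 0-indexed ----- *)
Definition cells := seq (nat * nat).

Definition rect_diagram (m n : nat) : cells :=
  [seq (r, c) | r <- iota 0 n, c <- iota 0 m].

Definition del_col_bottom (D : cells) (c k : nat) : cells :=
  let rows := sort geq [seq p.1 | p <- D & p.2 == c] in
  let gone := take k rows in
  [seq p <- D | ~~ ((p.2 == c) && (p.1 \in gone))].

Definition row_len (D : cells) (r : nat) : nat := count (fun p => p.1 == r) D.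

Definition add_row_end (D : cells) (r k : nat) : cells :=
  D ++ [seq (r, row_len D r + t) | t <- iota 0 k].

(* (m^n) * nu as a diagram: for i = 1..k (here 0-indexed i = 0..k-1),
   delete nu_i boxes from the bottom of column m+1-i (0-indexed: m-1-i)
   and add nu_i boxes to the end of row i *)
Definition star_diagram (m n : nat) (nu : seq nat) : cells :=
  foldl (fun D i => add_row_end (del_col_bottom D (m - 1 - i) (nth 0 nu i))
                                i (nth 0 nu i))
        (rect_diagram m n) (iota 0 (size nu)).

(* the resulting partition, read off as row lengths (all boxes lie in rows < n) *)
Definition star (m n : nat) (nu : seq nat) : seq nat :=
  [seq row_len (star_diagram m n nu) r | r <- iota 0 n].

Definition family_of_shape (m n : nat) (F : {fset {fset nat}}) : Prop :=
  (#|` F| = n)%fset /\ forall A, A \in F -> (#|` A| = m)%fset.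

Definition has_type (F : {fset {fset nat}}) (la : seq nat) : Prop :=
  forall i, 1 <= i <= largest_part la ->
    (#|` [fset A in F | i \in A]|)%fset = conj_part la i.

(* Main.v *)
Require Import Defs.
From HB Require Import structures.
From mathcomp Require Import all_boot.
From mathcomp Require Import finmap.
From mathcomp Require Import zify.
Set Implicit Arguments. Unset Strict Implicit. Unset Printing Implicit Defensive.

Lemma count_mem_size (T : eqType) (s t : seq T) (P : pred T) :
  uniq s -> uniq t -> (forall x, (x \in s) && P x = (x \in t)) -> count P s = size t.
Proof.
move=> us ut H; rewrite -size_filter; apply: perm_size; apply: uniq_perm.
- exact: filter_uniq.
- exact: ut.
by move=> x; rewrite mem_filter andbC H.
Qed.

Lemma count_split (T : Type) (a b : pred T) (s : seq T) :
  count a s = count (fun x => b x && a x) s + count (fun x => ~~ b x && a x) s.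
Proof. elim: s => //= x s ->; case: (b x); case: (a x) => /=; lia. Qed.

Lemma count_two (T : eqType) (P : pred T) (s : seq T) x y :
  uniq s -> x \in s -> y \in s -> P x -> P y -> x != y -> 1 < count P s.
Proof.
move=> us xs ys Px Py nxy; rewrite -size_filter.
have -> : 2 = size [:: x; y] by [].
apply: uniq_leq_size; first by rewrite /= inE nxy.
by move=> z; rewrite !inE => /orP [] /eqP ->; rewrite mem_filter ?Px ?Py.
Qed.

Lemma count_le1_eq (T : eqType) (P : pred T) (s : seq T) x y :
  uniq s -> count P s <= 1 -> x \in s -> y \in s -> P x -> P y -> x = y.
Proof.
move=> us c xs ys Px Py; apply/eqP; apply: contraTT c => nxy.
by rewrite -ltnNge; apply: count_two nxy.
Qed.

Lemma sum_eq_le (T : eqType) (f g : T -> nat) (s : seq T) :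
  (forall x, x \in s -> f x <= g x) -> \sum_(x <- s) f x = \sum_(x <- s) g x ->
  forall x, x \in s -> f x = g x.
Proof.
elim: s => // a s IH H; rewrite !big_cons => E x.
have Ha := H a (mem_head _ _).
have Hs : forall y, y \in s -> f y <= g y by move=> y ys; apply: H; rewrite inE ys orbT.
have Ls : \sum_(y <- s) f y <= \sum_(y <- s) g y by rewrite big_seq_cond [X in _ <= X]big_seq_cond; apply: leq_sum => i /andP [] /Hs.
have Ea : f a = g a by lia.
rewrite inE => /orP [/eqP -> // | xs]; apply: IH => //; lia.
Qed.

Lemma count_sumb (T : Type) (P : pred T) (s : seq T) : count P s = \sum_(x <- s) (P x : nat).
Proof. by elim: s => [|x s IH]; rewrite ?big_nil ?big_cons //= IH. Qed.

Lemma geq_tr : transitive geq.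
Proof. by move=> y x z h1 h2; apply: leq_trans h2 h1. Qed.

Lemma sorted_le_head (x : nat) s : sorted geq (x :: s) -> forall y, y \in s -> y <= x.
Proof. by move=> /= p y ys; have /allP := order_path_min geq_tr p; apply. Qed.

Lemma nth_le_head (x : nat) s j : sorted geq (x :: s) -> nth 0 s j <= x.
Proof.
move=> p; case: (ltnP j (size s)) => h; first by apply: sorted_le_head p _ (mem_nth _ h).
by rewrite nth_default.
Qed.

Lemma young (nu : seq nat) (P : seq (nat * nat)) : sorted geq nu -> uniq P ->
 (forall j, count (fun p => p.1 == j) P = nth 0 nu j) ->
 (forall t, count (fun p => p.2 == t) P = count (fun x => t < x) nu) ->
 forall j t, ((j, t) \in P) = (t < nth 0 nu j).
Proof.
elim: nu P => [|x nu IH] P srt uP Hr Hc.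
  case: P uP Hr Hc => [|p P] //= uP Hr Hc j t; first by rewrite nth_nil.
  by have := Hr p.1; rewrite eqxx nth_nil.
have Hle := sorted_le_head srt.
have a : forall p, p \in P -> p.2 < x.
  move=> p pP; rewrite ltnNge; apply/negP => xp.
  have : 0 < count (fun q => q.2 == p.2) P by rewrite -has_count; apply/hasP; exists p.
  rewrite Hc /=; have -> : (p.2 < x) = false by rewrite ltnNge xp.
  rewrite add0n -has_count => /hasP [y ys] lt.
  by have := leq_ltn_trans xp lt; rewrite ltnNge (Hle y ys).
have b : forall t, t < x -> (0, t) \in P.
  move=> t tx.
  pose R0 := [seq p.2 | p <- P & p.1 == 0].
  have uR : uniq R0.
    rewrite map_inj_in_uniq ?filter_uniq // => u v; rewrite !mem_filter.
    by case: u v => [p1 p2] [q1 q2] /= /andP [/eqP -> _] /andP [/eqP -> _] ->.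
  have sR : size R0 = x by rewrite size_map size_filter Hr.
  have sub : {subset R0 <= iota 0 x}.
    by move=> y /mapP [q]; rewrite mem_filter => /andP [_ /a] + ->; rewrite mem_iota.
  have sz : size (iota 0 x) <= size R0 by rewrite size_iota sR.
  have [_ E] := uniq_min_size uR sub sz.
  have : t \in R0 by rewrite E mem_iota.
  by case/mapP => -[p1 p2]; rewrite mem_filter /= => /andP [/eqP -> H] ->.
have H0 : forall t, ((0, t) \in P) = (t < x).
  by move=> t; apply/idP/idP => [/a | /b].
pose P' := [seq (p.1.-1, p.2) | p <- P & p.1 != 0].
have uP' : uniq P'.
  rewrite map_inj_in_uniq ?filter_uniq // => u v; rewrite !mem_filter.
  case: u v => [p1 p2] [q1 q2] /= /andP [p0 _] /andP [q0 _] [] e ->.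
  by congr (_, _); lia.
have memP' : forall j t, ((j, t) \in P') = ((j.+1, t) \in P).
  move=> j t; apply/idP/idP.
    by case/mapP => -[p1 p2]; rewrite mem_filter /= => /andP [p0 pP] [-> ->]; rewrite prednK ?lt0n.
  by move=> h; apply/mapP; exists (j.+1, t); rewrite // mem_filter h.
have Hr' : forall j, count (fun p => p.1 == j) P' = nth 0 nu j.
  move=> j; rewrite count_map count_filter -[RHS]/(nth 0 (x :: nu) j.+1) -Hr.
  by apply: eq_count => -[p1 p2] /=; apply/idP/idP; lia.
have Hc' : forall t, count (fun p => p.2 == t) P' = count (fun y => t < y) nu.
  move=> t; rewrite count_map count_filter.
  have := Hc t; rewrite (count_split _ (fun p => p.1 == 0)) /=.
  have -> : count (fun p => (p.1 == 0) && (p.2 == t)) P = (t < x).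
    rewrite -H0 -(count_uniq_mem _ uP); apply: eq_count => -[p1 p2] /=.
    by rewrite xpair_eqE.
  move/eqP; rewrite eqn_add2l => /eqP <-.
  by apply: eq_count => -[p1 p2] /=; rewrite andbC.
have IH' := IH P' (path_sorted srt) uP' Hr' Hc'.
by case=> [|j] t; rewrite ?H0 //= -memP' IH'.
Qed.


Lemma sumn_ge_size (s : seq nat) : all (fun x => 0 < x) s -> size s <= sumn s.
Proof. elim: s => //= x s IH /andP [x0 /IH]; lia. Qed.

Lemma part_mono (nu : seq nat) : sorted geq nu -> forall i j, i <= j -> nth 0 nu j <= nth 0 nu i.
Proof.
move=> srt i j ij; case: (ltnP j (size nu)) => jn; last by rewrite nth_default.
have := sorted_leq_nth geq_tr (@leqnn) 0 srt; apply => //; rewrite inE; lia.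
Qed.

Lemma part_head (n : nat) (nu : seq nat) : 0 < n -> is_partition_of n.-1 nu ->
  nth 0 nu 0 + size nu <= n.
Proof.
move=> n0 /and3P [_ pos /eqP s]; case: nu pos s => [|x s] /=; first lia.
move=> /andP [x0 /sumn_ge_size]; lia.
Qed.

Lemma part_pos (nu : seq nat) j : all (fun x => 0 < x) nu -> j < size nu -> 0 < nth 0 nu j.
Proof. by move=> /allP a jn; apply: a; apply: mem_nth. Qed.

Definition inD (m n : nat) (nu : seq nat) (i : nat) (p : nat * nat) : bool :=
  ((p.1 < n) && (p.2 < m) && ~~((m - 1 - p.2 < i) && (n <= p.1 + nth 0 nu (m - 1 - p.2))))
  || ((p.1 < i) && (m <= p.2) && (p.2 < m + nth 0 nu p.1)).

Definition stepD (m : nat) (nu : seq nat) (D : cells) (i : nat) : cells :=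
  add_row_end (del_col_bottom D (m - 1 - i) (nth 0 nu i)) i (nth 0 nu i).

Definition Dg (m n : nat) (nu : seq nat) (i : nat) : cells :=
  foldl (stepD m nu) (rect_diagram m n) (iota 0 i).

Lemma Dg_S m n nu i : Dg m n nu i.+1 = stepD m nu (Dg m n nu i) i.
Proof. by rewrite /Dg -addn1 iotaD foldl_cat. Qed.

Lemma Dg_0 m n nu : uniq (Dg m n nu 0) /\ forall p, (p \in Dg m n nu 0) = inD m n nu 0 p.
Proof.
rewrite /Dg /= /rect_diagram; split.
  by apply: allpairs_uniq; rewrite ?iota_uniq // => -[a b] [c d] _ _ /= [-> ->].
case=> r c; rewrite /inD /= andbT orbF.
apply/allpairsP/idP => [[[a b] /=] [] | /andP [rn cm]].
  by rewrite !mem_iota /= => an bm [-> ->]; rewrite an bm.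
by exists (r, c); rewrite !mem_iota.
Qed.

Lemma geq_total : total geq. Proof. by move=> a b; apply: leq_total. Qed.
Lemma geq_anti : antisymmetric geq. Proof. by move=> a b /andP [h1 h2]; apply/eqP; rewrite eqn_leq; apply/andP; split. Qed.

Lemma sort_iota_geq (X : seq nat) n : uniq X -> X =i iota 0 n -> sort geq X = rev (iota 0 n).
Proof.
move=> uX E.
have := (perm_sortP geq_total geq_tr geq_anti X (rev (iota 0 n))).
move=> /(_ _) ->.
  by rewrite sorted_sort //; [apply: geq_tr | rewrite rev_sorted iota_sorted].
apply: uniq_perm => //; first by rewrite rev_uniq iota_uniq.
by move=> x; rewrite mem_rev E.
Qed.

Lemma mem_row (i r c : nat) (s : seq nat) : ((r, c) \in [seq (i, x) | x <- s]) = (r == i) && (c \in s).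
Proof.
apply/mapP/andP => [[x xs [-> ->]] | [/eqP -> cs]]; first by rewrite eqxx.
by exists c.
Qed.

Lemma stepD_inv m n nu i D : 0 < n -> is_partition_of n.-1 nu -> size nu <= m -> i < size nu ->
  uniq D -> (forall p, (p \in D) = inD m n nu i p) ->
  uniq (stepD m nu D i) /\ forall p, (p \in stepD m nu D i) = inD m n nu i.+1 p.
Proof.
move=> n0 Hp km ik uD HD.
have Hp' := Hp; case/and3P: Hp' => srt pos /eqP sn.
have F2 := part_head n0 Hp.
have F1 : forall j, i + nth 0 nu j < n.
  by move=> j; have := part_mono srt (leq0n j); lia.
have vin : nth 0 nu i <= n by have := F1 i; lia.
set c0 := m - 1 - i; set vi := nth 0 nu i.
set X := [seq p.1 | p <- D & p.2 == c0].
have uX : uniq X.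
  rewrite map_inj_in_uniq ?filter_uniq // => -[a b] [a' b']; rewrite !mem_filter /=.
  by move=> /andP [/eqP -> _] /andP [/eqP -> _] ->.
have EX : X =i iota 0 n.
  move=> r; rewrite mem_iota add0n /=; apply/mapP/idP => [[[a b]]|rn].
    rewrite mem_filter /= HD /inD /= => /andP [/eqP -> H] ->; move: H; rewrite /c0; lia.
  exists (r, c0) => //; rewrite mem_filter /= eqxx HD /inD /= /c0.
  have -> : m - 1 - (m - 1 - i) = i by lia.
  lia.
have gone : forall r, (r \in take vi (sort geq X)) = (n - vi <= r < n).
  move=> r; rewrite (sort_iota_geq uX EX) take_rev size_iota drop_iota mem_rev mem_iota.
  lia.
set D' := del_col_bottom D c0 vi.
have HD' : forall p, (p \in D') = inD m n nu i p && ~~((p.2 == c0) && (n - vi <= p.1 < n)).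
  by move=> p; rewrite /D' /del_col_bottom mem_filter -/X gone HD andbC.
have uD' : uniq D' by apply: filter_uniq.
have rl : row_len D' i = m.
  rewrite /row_len (@count_mem_size _ _ [seq (i, x) | x <- iota 0 m]) ?size_map ?size_iota //.
    by rewrite map_inj_uniq ?iota_uniq // => a b [].
  case=> r c; rewrite HD' mem_row mem_iota /inD /=.
  case: (eqVneq r i) => [->|ne]; last by rewrite andbF.
  have := F1 (m - 1 - c); have := F1 i; rewrite -/vi; lia.
rewrite /stepD -/c0 -/vi /add_row_end -/D' rl; split.
  rewrite cat_uniq uD' /=; apply/andP; split.
    apply/hasP => -[p /mapP [t _ ->]]; rewrite HD' /inD /=; lia.
  by rewrite map_inj_uniq ?iota_uniq // => a b [] /eqP; rewrite eqn_add2l => /eqP.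
have Hn : forall r c, ((r, c) \in [seq (i, m + t) | t <- iota 0 vi]) = (r == i) && (m <= c < m + vi).
  move=> r c; apply/mapP/idP => [[t] | /andP [/eqP -> h]].
    by rewrite mem_iota => ti [-> ->]; rewrite eqxx /=; lia.
  by exists (c - m); [rewrite mem_iota; lia | congr (_, _); lia].
case=> r c; rewrite mem_cat HD' Hn /inD /=.
case: (eqVneq c c0) => [->|ne].
  rewrite /c0; have -> : m - 1 - (m - 1 - i) = i by lia.
  rewrite -/vi; lia.
case: (eqVneq r i) => [->|ner]; rewrite -/vi; lia.
Qed.

Lemma Dg_inv m n nu i : 0 < n -> is_partition_of n.-1 nu -> size nu <= m -> i <= size nu ->
  uniq (Dg m n nu i) /\ forall p, (p \in Dg m n nu i) = inD m n nu i p.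
Proof.
move=> n0 Hp km; elim: i => [|i IH] ik; first exact: Dg_0.
have [u h] := IH (ltnW ik).
by rewrite Dg_S; apply: stepD_inv.
Qed.

Lemma rev_iota0 m : rev (iota 0 m) = [seq m - 1 - c | c <- iota 0 m].
Proof.
apply: (@eq_from_nth _ 0); first by rewrite size_rev size_map.
move=> i; rewrite size_rev size_iota => im.
rewrite nth_rev ?size_iota // (nth_map 0) ?size_iota // !nth_iota //; lia.
Qed.

Lemma count_nu_iota (nu : seq nat) (Q : pred nat) m : size nu <= m ->
  count (fun j => (j < size nu) && Q (nth 0 nu j)) (iota 0 m) = count Q nu.
Proof.
move=> km; rewrite -(subnKC km) iotaD count_cat.
have -> : count (fun j => (j < size nu) && Q (nth 0 nu j)) (iota (0 + size nu) (m - size nu)) = 0.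
  apply/eqP; rewrite -leqn0 leqNgt -has_count; apply/hasP => -[j]; rewrite mem_iota; lia.
rewrite addn0 -[in RHS](mkseq_nth 0 nu) /mkseq count_map.
by apply: eq_in_count => j; rewrite mem_iota /= => ->.
Qed.

Definition lam (m n : nat) (nu : seq nat) (r : nat) : nat :=
  m - count (fun x => n <= r + x) nu + nth 0 nu r.

Lemma row_len_star m n nu r : 0 < n -> is_partition_of n.-1 nu -> size nu <= m -> r < n ->
  row_len (star_diagram m n nu) r = lam m n nu r.
Proof.
move=> n0 Hp km rn.
have [u h] := Dg_inv n0 Hp km (leqnn (size nu)).
have -> : star_diagram m n nu = Dg m n nu (size nu) by [].
set keep := fun c => ~~((m - 1 - c < size nu) && (n <= r + nth 0 nu (m - 1 - c))).
have nd : size nu <= r -> nth 0 nu r = 0 by move=> h'; rewrite nth_default.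
rewrite /row_len (@count_mem_size _ _ ([seq (r, c) | c <- iota 0 m & keep c] ++ [seq (r, c) | c <- iota m (nth 0 nu r)])) //.
- rewrite size_cat !size_map size_filter size_iota /lam; congr (_ + _).
  have := count_predC keep (iota 0 m); rewrite size_iota.
  have -> : count (predC keep) (iota 0 m) = count (fun x => n <= r + x) nu.
    rewrite -(count_nu_iota (fun x => n <= r + x) km) -count_rev rev_iota0 count_map.
    apply: eq_in_count => c; rewrite mem_iota /= /keep negbK => cm; have -> : m - 1 - (m - 1 - c) = c by lia. done.
  by move=> E; rewrite -[in RHS]E addnK.
- rewrite cat_uniq !map_inj_uniq ?filter_uniq ?iota_uniq //=; try by move=> a b [].
  rewrite andbT; apply/hasP => -[p /mapP [c]]; rewrite mem_iota => cm -> /mapP [c']; rewrite mem_filter mem_iota.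
  by case/and3P => _ _ c2 [] e; move: cm c2; rewrite e; lia.
case=> r' c; rewrite h /inD mem_cat !mem_row mem_filter !mem_iota /= /keep.
case: (eqVneq r' r) => [->|ne]; last by rewrite !andbF.
move: nd; lia.
Qed.

Lemma star_eq m n nu : 0 < n -> is_partition_of n.-1 nu -> size nu <= m ->
  star m n nu = [seq lam m n nu r | r <- iota 0 n].
Proof.
move=> n0 Hp km; apply/eq_in_map => r; rewrite mem_iota => /andP [_ rn].
exact: row_len_star.
Qed.


Lemma count_prefix (s : seq nat) (P : pred nat) : sorted geq s ->
  (forall x y, x <= y -> P x -> P y) -> ~~ P 0 ->
  forall q, (count P s <= q) = ~~ P (nth 0 s q).
Proof.
move=> srt mon P0; elim: s srt => [|x s IH] srt q; first by rewrite nth_nil P0.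
have Hle := sorted_le_head srt.
have IH' := IH (path_sorted srt).
have c0 : ~~ P x -> count P s = 0.
  move=> Px; apply/eqP; rewrite -leqn0 leqNgt -has_count; apply/hasP => -[y ys Py].
  by move/negP: Px; apply; apply: mon (Hle y ys) Py.
case: q => [|q] /=.
  case Px: (P x) => /=; first by rewrite add1n ltn0.
  by rewrite c0 ?Px.
case Px: (P x) => /=; first by rewrite add1n ltnS IH'.
rewrite c0 ?Px //; apply/esym/negP => Pn; move/negP: Px; apply; apply: mon Pn.
exact: nth_le_head.
Qed.

Lemma count_lt_iota q n : q <= n -> count (fun r => r < q) (iota 0 n) = q.
Proof.
move=> qn; rewrite -(subnKC qn) iotaD count_cat.
rewrite (@eq_in_count _ _ predT (iota 0 q)); last by move=> r; rewrite mem_iota.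
rewrite count_predT size_iota.
have -> : count (fun r => r < q) (iota (0 + q) (n - q)) = 0.
  apply/eqP; rewrite -leqn0 leqNgt -has_count; apply/hasP => -[j]; rewrite mem_iota; lia.
by rewrite addn0.
Qed.

Lemma all_le_head (nu : seq nat) : sorted geq nu -> forall x, x \in nu -> x <= nth 0 nu 0.
Proof. case: nu => [|y s] // srt x; rewrite inE => /orP [/eqP -> // | ]; exact: sorted_le_head srt x. Qed.

Lemma lam_lt m n nu r : 0 < n -> is_partition_of n.-1 nu -> r < size nu -> lam m n nu r = m + nth 0 nu r.
Proof.
move=> n0 Hp rk; have F2 := part_head n0 Hp; case/and3P: Hp => srt _ _.
rewrite /lam; have -> : count (fun x => n <= r + x) nu = 0.
  apply/eqP; rewrite -leqn0 leqNgt -has_count; apply/hasP => -[y ys].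
  have := all_le_head srt ys; lia.
by rewrite subn0.
Qed.

Lemma lam_ge m n nu r : size nu <= r -> lam m n nu r = m - count (fun x => n <= r + x) nu.
Proof. by move=> h; rewrite /lam nth_default // addn0. Qed.

Lemma largest_star m n nu : 0 < n -> is_partition_of n.-1 nu -> size nu <= m ->
  largest_part (star m n nu) = m + nth 0 nu 0.
Proof.
move=> n0 Hp km; rewrite star_eq // /largest_part big_map.
have Hp' := Hp; case/and3P: Hp' => srt _ _.
apply/eqP; rewrite eqn_leq; apply/andP; split.
  apply/bigmax_leqP_seq => r _ _; rewrite /lam.
  have := part_mono srt (leq0n r); lia.
have l0 : lam m n nu 0 = m + nth 0 nu 0.
  case: (posnP (size nu)) => k0; last exact: lam_lt.
  by case: nu {Hp srt km} k0 => // _; rewrite /lam /=; lia.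
rewrite -l0; apply: (leq_bigmax_seq (F := lam m n nu)) => //.
by rewrite mem_iota.
Qed.

Lemma conj_star1 m n nu i : 0 < n -> is_partition_of n.-1 nu -> size nu <= m -> 1 <= i <= m ->
  conj_part (star m n nu) i = n - nth 0 nu (m - i).
Proof.
move=> n0 Hp km im; rewrite star_eq // /conj_part count_map.
have F2 := part_head n0 Hp; have Hp' := Hp; case/and3P: Hp' => srt _ _.
have F1 := part_mono srt (leq0n (m - i)).
rewrite -(@count_lt_iota (n - nth 0 nu (m - i)) n) ?leq_subr //.
apply: eq_in_count => r; rewrite mem_iota /= => rn.
case: (ltnP r (size nu)) => rk.
  rewrite lam_lt //; lia.
rewrite lam_ge //.
have cs := count_size (fun x => n <= r + x) nu.
have mon : forall x y, x <= y -> n <= r + x -> n <= r + y by move=> x y; lia.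
have P0 : ~~ (n <= r + 0) by lia.
have := @count_prefix nu (fun x => n <= r + x) srt mon P0 (m - i).
lia.
Qed.

Lemma conj_star2 m n nu t : 0 < n -> is_partition_of n.-1 nu -> size nu <= m ->
  conj_part (star m n nu) (m.+1 + t) = count (fun x => t < x) nu.
Proof.
move=> n0 Hp km; rewrite star_eq // /conj_part count_map.
have F2 := part_head n0 Hp.
have kn : size nu <= n by lia.
rewrite -(count_nu_iota (fun x => t < x) kn).
apply: eq_in_count => r; rewrite mem_iota /= => rn.
case: (ltnP r (size nu)) => rk.
  rewrite lam_lt //; lia.
rewrite lam_ge //; lia.
Qed.



Definition Bs (m : nat) : {fset nat} := [fset x in iota 1 m]%fset.
Definition Sfam (m j t : nat) : {fset nat} := ((m.+1 + t)%N |` (Bs m `\ (m - j)%N))%fset.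

Lemma inB m x : (x \in Bs m) = (1 <= x <= m).
Proof. rewrite /Bs inE mem_iota; lia. Qed.

Lemma inS m j t x : (x \in Sfam m j t) = (x == m.+1 + t) || ((x != m - j) && (1 <= x <= m)).
Proof. by rewrite /Sfam in_fset1U in_fsetD1 inB. Qed.

Lemma card_eq (T : choiceType) (F : {fset T}) (s : seq T) : uniq s -> (forall x, (x \in F) = (x \in s)) ->
  #|` F|%fset = size s.
Proof.
move=> us H; have -> : F = [fset x in s]%fset by apply/fsetP => x; rewrite H inE.
by rewrite card_fseq undup_id.
Qed.

Lemma cardP (T : choiceType) (F : {fset T}) (s : seq T) (P : pred T) : uniq s -> (forall x, (x \in F) = (x \in s)) ->
  #|` [fset A in F | P A]%fset| = count P s.
Proof.
move=> us H; rewrite -size_filter; apply: card_eq; first exact: filter_uniq.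
by move=> x; rewrite !inE H mem_filter andbC.
Qed.

Lemma card_B m : #|` Bs m| = m.
Proof. by rewrite (@card_eq _ _ (iota 1 m)) ?size_iota ?iota_uniq // => x; rewrite inB mem_iota; lia. Qed.

Lemma card_S m j t : j < m -> #|` Sfam m j t| = m.
Proof.
move=> jm; rewrite /Sfam cardfsU1 in_fsetD1 inB.
have -> : (m.+1 + t <= m) = false by lia.
have := cardfsD1 (m - j)%N (Bs m); rewrite card_B inB.
have -> : (1 <= m - j <= m) by lia.
rewrite andbF /=; lia.
Qed.

Lemma S_inj m j t j' t' : j < m -> j' < m -> Sfam m j t = Sfam m j' t' -> j = j' /\ t = t'.
Proof.
move=> jm jm' E.
have h1 := inS m j t (m - j)%N; have h2 := inS m j' t' (m - j)%N.
have h3 := inS m j t (m.+1 + t)%N; have h4 := inS m j' t' (m.+1 + t)%N.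
rewrite E in h1 h3; rewrite h1 in h2; rewrite h3 in h4.
move: h2 h4; rewrite !eqxx /=; lia.
Qed.

Lemma S_neq_B m j t : j < m -> Sfam m j t != Bs m.
Proof.
move=> jm; apply/eqP => E; have := inS m j t (m - j)%N; rewrite E inB eqxx; lia.
Qed.

Lemma count_allpairs (S T : Type) (s : seq S) (t : S -> seq T) (Q : pred (S * T)) :
  count Q [seq (x, y) | x <- s, y <- t x] = \sum_(x <- s) count (fun y => Q (x, y)) (t x).
Proof. by elim: s => [|x s IH]; rewrite ?big_nil ?big_cons // allpairs_cons count_cat count_map IH. Qed.

Lemma sum_nth (nu : seq nat) m : size nu <= m -> \sum_(j <- iota 0 m) nth 0 nu j = sumn nu.
Proof.
move=> km; rewrite -(subnKC km) iotaD big_cat.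
have -> : \sum_(j <- iota (0 + size nu) (m - size nu)) nth 0 nu j = 0.
  rewrite big_seq big1 // => j; rewrite mem_iota => h; rewrite nth_default //; lia.
rewrite [X in X = _]addn0.
by rewrite -[in RHS](mkseq_nth 0 nu) /mkseq sumnE big_map.
Qed.

Definition Dnu (m : nat) (nu : seq nat) : seq (nat * nat) :=
  [seq p <- [seq (j, t) | j <- iota 0 m, t <- iota 0 (nth 0 nu 0)] | p.2 < nth 0 nu p.1].

Definition Gs (m : nat) (nu : seq nat) : seq {fset nat} :=
  Bs m :: [seq Sfam m p.1 p.2 | p <- Dnu m nu].

Definition Gfam m nu : {fset {fset nat}} := [fset A in Gs m nu]%fset.

Lemma mem_Dnu m nu j t : sorted geq nu -> ((j, t) \in Dnu m nu) = (j < m) && (t < nth 0 nu j).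
Proof.
move=> srt; rewrite /Dnu mem_filter /=; apply/andP/andP => [[h /allpairsP [[a b] /=]] | [jm tj]].
  rewrite !mem_iota => -[am _ [ea eb]]; move: h; rewrite ea eb; split => //; lia.
split => //; apply/allpairsP; exists (j, t); rewrite /= !mem_iota; split => //.
have := part_mono srt (leq0n j); lia.
Qed.

Lemma uniq_Dnu m nu : uniq (Dnu m nu).
Proof. by apply: filter_uniq; apply: allpairs_uniq; rewrite ?iota_uniq // => -[a b] [c d] _ _ /= [-> ->]. Qed.

Lemma uniq_Gs m nu : sorted geq nu -> uniq (Gs m nu).
Proof.
move=> srt; rewrite /Gs /= map_inj_in_uniq ?uniq_Dnu ?andbT.
  apply/mapP => -[[j t]]; rewrite mem_Dnu // => /andP [jm _] /= E.
  by move/eqP: (S_neq_B t jm); rewrite E.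
move=> [j t] [j' t']; rewrite !mem_Dnu // => /andP [jm _] /andP [jm' _] /= E.
by have [-> ->] := S_inj jm jm' E.
Qed.

Lemma size_Dnu m nu : sorted geq nu -> size nu <= m -> size (Dnu m nu) = sumn nu.
Proof.
move=> srt km; rewrite size_filter count_allpairs -(sum_nth km).
apply: eq_big_seq => j _ /=; apply: count_lt_iota; apply: part_mono srt _ _ (leq0n j).
Qed.

Lemma sum_except (f : nat -> nat) m j0 : j0 < m ->
  \sum_(j <- iota 0 m) (if j != j0 then f j else 0) + f j0 = \sum_(j <- iota 0 m) f j.
Proof.
move=> jm; have mj : j0 \in iota 0 m by rewrite mem_iota.
rewrite (bigD1_seq j0 mj (iota_uniq 0 m)) [in RHS](bigD1_seq j0 mj (iota_uniq 0 m)) /= eqxx add0n addnC.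
by congr (_ + _); apply: eq_bigr => j ->.
Qed.

Lemma memG m nu A : (A \in Gfam m nu) = (A \in Gs m nu).
Proof. by rewrite /Gfam in_fset. Qed.

Lemma countG m nu i : sorted geq nu ->
  count (fun A => i \in A) (Gs m nu) =
  (i \in Bs m) + \sum_(j <- iota 0 m) count (fun t => (i \in Sfam m j t) && (t < nth 0 nu j)) (iota 0 (nth 0 nu 0)).
Proof.
move=> srt; rewrite /Gs /= count_map /Dnu count_filter count_allpairs.
by congr (_ + _).
Qed.

Lemma cntG1 m n nu i : 0 < n -> is_partition_of n.-1 nu -> size nu <= m -> 1 <= i <= m ->
  count (fun A => i \in A) (Gs m nu) = n - nth 0 nu (m - i).
Proof.
move=> n0 Hp km im; have Hp' := Hp; case/and3P: Hp' => srt _ /eqP sn.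
rewrite countG // inB im.
have -> : \sum_(j <- iota 0 m) count (fun t => (i \in Sfam m j t) && (t < nth 0 nu j)) (iota 0 (nth 0 nu 0))
   = \sum_(j <- iota 0 m) (if j != m - i then nth 0 nu j else 0).
  rewrite big_seq_cond [RHS]big_seq_cond; apply: eq_bigr => j /andP [+ _]; rewrite mem_iota => jm.
  have e : forall t, (i \in Sfam m j t) = (j != m - i) by move=> t; rewrite inS; lia.
  under eq_count => t do rewrite e.
  case: (j != m - i); first by apply: count_lt_iota; apply: part_mono srt _ _ (leq0n j).
  by rewrite /= count_pred0.
have mi : m - i < m by lia.
have := sum_except (fun j => nth 0 nu j) mi; rewrite sum_nth // sn /=.
have := part_mono srt (leq0n (m - i)); have := part_head n0 Hp.
case: (posnP (size nu)) => k0; last lia.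
have -> : nth 0 nu (m - i) = 0 by rewrite nth_default ?k0.
lia.
Qed.

Lemma cntG2 m n nu t0 : 0 < n -> is_partition_of n.-1 nu -> size nu <= m -> t0 < nth 0 nu 0 ->
  count (fun A => (m.+1 + t0)%N \in A) (Gs m nu) = count (fun x => t0 < x) nu.
Proof.
move=> n0 Hp km tn; have Hp' := Hp; case/and3P: Hp' => srt _ /eqP sn.
rewrite countG // inB.
have -> : (1 <= m.+1 + t0 <= m) = false by lia.
rewrite add0n -(count_nu_iota _ km) count_sumb.
apply: eq_bigr => j _.
have e : forall t, ((m.+1 + t0)%N \in Sfam m j t) && (t < nth 0 nu j) = (t == t0) && (t0 < nth 0 nu j).
  move=> t; rewrite inS; case: (eqVneq t t0) => [-> | ne] /=; first by rewrite eqxx.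
  apply/negbTE; lia.
under eq_count => t do rewrite e.
case: (ltnP j (size nu)) => jk /=; rewrite ?jk /=.
  case: (t0 < nth 0 nu j).
    by rewrite (eq_count (a2 := pred1 t0)) ?count_uniq_mem ?iota_uniq ?mem_iota /= ?add0n ?tn // => t; rewrite andbT.
  by rewrite (eq_count (a2 := pred0)) ?count_pred0 // => t; rewrite andbF.
by rewrite nth_default // (eq_count (a2 := pred0)) ?count_pred0 // => t; rewrite ltn0 andbF.
Qed.

Lemma G_ok m n nu : 0 < n -> is_partition_of n.-1 nu -> size nu <= m ->
  family_of_shape m n (Gfam m nu) /\ has_type (Gfam m nu) (star m n nu).
Proof.
move=> n0 Hp km; have Hp' := Hp; case/and3P: Hp' => srt _ /eqP sn.
split; first split.
- rewrite (card_eq (s := Gs m nu)) ?uniq_Gs // => [|A]; last by rewrite memG.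
  rewrite /= size_map size_Dnu // sn; lia.
- move=> A; rewrite memG /Gs inE => /orP [/eqP -> | /mapP [[j t]]]; first exact: card_B.
  by rewrite mem_Dnu // => /andP [jm _] ->; apply: card_S.
move=> i; rewrite largest_star // => im.
rewrite (cardP (s := Gs m nu)) ?uniq_Gs // => [|A]; last by rewrite memG.
case: (leqP i m) => ilm.
  rewrite (cntG1 (n := n)) ?conj_star1 //; lia.
have -> : i = (m.+1 + (i - m.+1))%N by lia.
rewrite (cntG2 (n := n)) ?conj_star2 //; lia.
Qed.


Lemma dcount (s : seq {fset nat}) (X : seq nat) :
  \sum_(A <- s) count (fun x => x \in A) X = \sum_(x <- X) count (fun A => x \in A) s.
Proof.
under eq_bigr do rewrite count_sumb.
rewrite exchange_big; apply: eq_bigr => x _; by rewrite count_sumb.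
Qed.

Lemma cnt_le (A : {fset nat}) (X : seq nat) : uniq X -> count (fun x => x \in A) X <= #|` A|%fset.
Proof.
move=> uX; rewrite -size_filter; apply: uniq_leq_size; first exact: filter_uniq.
by move=> x; rewrite mem_filter => /andP [].
Qed.

Lemma size_le1 (T : eqType) (s : seq T) a : uniq s -> (forall x, x \in s -> x = a) -> size s <= 1.
Proof.
move=> us H; have -> : 1 = size [:: a] by [].
by apply: uniq_leq_size => // x /H ->; rewrite inE.
Qed.

Lemma sum_sub_nu (nu : seq nat) m n : size nu <= m -> (forall j, nth 0 nu j <= n) ->
  \sum_(j <- iota 0 m) (n - nth 0 nu j) + sumn nu = m * n.
Proof.
move=> km H; rewrite -(sum_nth km) -big_split /=.
rewrite (eq_bigr (fun _ => n)); last by move=> j _; rewrite subnK.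
by rewrite big_const_seq count_predT size_iota iter_addn_0 mulnC.
Qed.

Lemma sum_conj (nu : seq nat) : sorted geq nu ->
  \sum_(t <- iota 0 (nth 0 nu 0)) count (fun x => t < x) nu = sumn nu.
Proof.
move=> srt; under eq_bigr do rewrite count_sumb.
rewrite exchange_big sumnE; apply: eq_big_seq => x xs /=.
rewrite -count_sumb; apply: count_lt_iota; exact: all_le_head.
Qed.

Lemma G_uniq m n nu (F : {fset {fset nat}}) : 0 < n -> is_partition_of n.-1 nu -> size nu <= m ->
  family_of_shape m n F -> has_type F (star m n nu) -> F = Gfam m nu.
Proof.
move=> n0 Hp km [cF sF] tF.
have Hp' := Hp; case/and3P: Hp' => srt _ /eqP sn.
have F2 := part_head n0 Hp.
have Fm := part_mono srt.
set v0 := nth 0 nu 0.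
have vle : forall j, nth 0 nu j <= n.-1.
  move=> j; have := Fm 0 j (leq0n j); case: (posnP (size nu)) => k0.
    by rewrite nth_default ?k0.
  rewrite -/v0; lia.
set s := enum_fset F.
have us : uniq s := fset_uniq F.
have sz : size s = n by [].
have memF : forall A, (A \in F) = (A \in s) by [].
have H1 : forall j, j < m -> count (fun A => (m - j)%N \in A) s = n - nth 0 nu j.
  move=> j jm; have := tF (m - j); rewrite largest_star // (cardP (s := s)) // conj_star1 //; try lia.
  have -> : (m - (m - j) = j)%N by lia.
  by apply; lia.
have H2 : forall t, t < v0 -> count (fun A => (m.+1 + t)%N \in A) s = count (fun x => t < x) nu.
  move=> t tv; have := tF (m.+1 + t); rewrite largest_star // (cardP (s := s)) // conj_star2 //.
  by apply; rewrite -/v0; lia.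
set XB := [seq (m - j)%N | j <- iota 0 m].
set XE := [seq (m.+1 + t)%N | t <- iota 0 v0].
have memXB : forall x, (x \in XB) = (1 <= x <= m).
  move=> x; apply/mapP/idP => [[j] | h]; first by rewrite mem_iota => h ->; lia.
  by exists (m - x)%N; rewrite ?mem_iota; lia.
have memXE : forall x, (x \in XE) = (m < x <= m + v0).
  move=> x; apply/mapP/idP => [[t] | h]; first by rewrite mem_iota => h ->; lia.
  by exists (x - m.+1)%N; rewrite ?mem_iota; lia.
have uXB : uniq XB.
  by rewrite map_inj_in_uniq ?iota_uniq // => a b; rewrite !mem_iota => ha hb; lia.
have uXE : uniq XE by rewrite map_inj_uniq ?iota_uniq // => a b /eqP; rewrite eqn_add2l => /eqP.
have uX : uniq (XB ++ XE).
  rewrite cat_uniq uXB uXE andbT /=; apply/hasP => -[x]; rewrite memXE memXB; lia.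
have sumB : \sum_(A <- s) count (fun x => x \in A) XB + n.-1 = m * n.
  rewrite dcount big_map (eq_big_seq (fun j => n - nth 0 nu j)); last first.
    by move=> j; rewrite mem_iota => /andP [_ jm]; apply: H1.
  rewrite -sn sum_sub_nu // => j; have := vle j; lia.
have sumE : \sum_(A <- s) count (fun x => x \in A) XE = n.-1.
  by rewrite dcount big_map (eq_big_seq (fun t => count (fun x => t < x) nu)) ?sum_conj //
     => t; rewrite mem_iota => /andP [_ tv]; apply: H2.
have eqX : forall A, A \in s -> count (fun x => x \in A) XB + count (fun x => x \in A) XE = m.
  have h1 : forall A, A \in s -> count (fun x => x \in A) XB + count (fun x => x \in A) XE <= m.
    by move=> A As; rewrite -count_cat -(sF A As); apply: cnt_le.
  have h2 : \sum_(A <- s) (count (fun x => x \in A) XB + count (fun x => x \in A) XE) = \sum_(A <- s) m.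
    rewrite big_split /= sumE big_const_seq count_predT sz iter_addn_0; exact: sumB.
  exact: (sum_eq_le h1 h2).
have subX : forall A x, A \in s -> x \in A -> (x \in XB) || (x \in XE).
  move=> A x As xA; rewrite -mem_cat.
  have sub : {subset [seq y <- XB ++ XE | y \in A] <= enum_fset A}.
    by move=> y; rewrite mem_filter => /andP [].
  have szl : size (enum_fset A) <= size [seq y <- XB ++ XE | y \in A].
    by rewrite size_filter count_cat eqX // -/(#|` A|%fset) sF.
  have [_ E] := uniq_min_size (filter_uniq _ uX) sub szl.
  by move: xA; rewrite -[x \in A]/(x \in enum_fset A) -E mem_filter => /andP [].
have cardA : forall A, A \in s -> #|` A|%fset = m by move=> A; apply: sF.
have Bchar : forall A, A \in s -> count (fun x => x \in A) XE = 0 -> A = Bs m.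
  move=> A As c0; apply/eqP; rewrite eqEfcard card_B cardA // leqnn andbT.
  apply/fsubsetP => x xA; rewrite inB -memXB.
  have := subX A x As xA; case: (x \in XB) => //= xE.
  move/eqP: c0; rewrite -leqn0 leqNgt -has_count => /hasP; case; by exists x.
have z1 : count (fun A => count (fun x => x \in A) XE == 0) s <= 1.
  rewrite -size_filter; apply: (size_le1 (a := Bs m)); first exact: filter_uniq.
  by move=> A; rewrite mem_filter => /andP [/eqP h As]; apply: Bchar.
have cE1 : forall A, A \in s -> count (fun x => x \in A) XE <= 1.
  have e : \sum_(A <- s) count (fun x => x \in A) XE =
           count (predC (fun A => count (fun x => x \in A) XE == 0)) s + \sum_(A <- s) (count (fun x => x \in A) XE - 1).
    rewrite count_sumb -big_split /=; apply: eq_bigr => A _; lia.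
  have cp := count_predC (fun A => count (fun x => x \in A) XE == 0) s.
  rewrite sz in cp; rewrite sumE in e.
  have : \sum_(A <- s) (count (fun x => x \in A) XE - 1) == 0.
    move: e z1 cp; set S := \sum_(A <- s) _; lia.
  rewrite sum_nat_seq_eq0 => /allP h A As; have := h A As; rewrite /= => /eqP; lia.
have struct : forall A, A \in s -> A = Bs m \/ exists j t, [/\ j < m, t < v0 & A = Sfam m j t].
  move=> A As; case: (posnP (count (fun x => x \in A) XE)) => c0; first by left; apply: Bchar.
  right; have cE := cE1 A As.
  have := eqX A As => cB.
  move: (c0); rewrite -has_count => /hasP [e /mapP [t]]; rewrite mem_iota /= => tv -> eA.
  have : 0 < count (predC (fun x => x \in A)) XB.
    have := count_predC (fun x => x \in A) XB; rewrite size_map size_iota; lia.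
  rewrite -has_count => /hasP [c /mapP [j]]; rewrite mem_iota /= => jm -> cA.
  exists j, t; split => //.
  apply/eqP; rewrite eqEfcard card_S // cardA // leqnn andbT.
  apply/fsubsetP => x xA; rewrite inS.
  have := subX A x As xA; rewrite memXB.
  case: (boolP (1 <= x <= m)) => /= hx.
    by move=> _; apply/orP; right; apply/andP; split => //; apply/eqP => ex; move: cA; rewrite -ex xA.
  move=> xE; apply/orP; left; apply/eqP.
  apply: (count_le1_eq uXE cE xE) => //; by rewrite memXE; lia.
set P := [seq p <- [seq (j, t) | j <- iota 0 m, t <- iota 0 v0] | Sfam m p.1 p.2 \in F].
have uP : uniq P.
  by apply: filter_uniq; apply: allpairs_uniq; rewrite ?iota_uniq // => -[a b] [c d] _ _ /= [-> ->].
have memP : forall j t, ((j, t) \in P) = [&& j < m, t < v0 & Sfam m j t \in F].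
  move=> j t; rewrite mem_filter /= andbC [RHS]andbA; congr (_ && _).
  apply/allpairsP/andP => [[[a b] /=]|[jm tv]].
    by rewrite !mem_iota => -[ha hb [-> ->]]; lia.
  by exists (j, t); rewrite /= !mem_iota; split => //; lia.
have memP1 : forall p, p \in P -> (p.1 < m) && (p.2 < v0).
  by case=> j t; rewrite memP => /and3P [-> -> _].
have injS : {in P &, injective (fun p : nat * nat => Sfam m p.1 p.2)}.
  move=> [j t] [j' t'] /memP1 /andP [jm _] /memP1 /andP [jm' _] /= E.
  by have [e1 e2] := S_inj jm jm' E; move: e1 e2 => /= -> ->.
have rows : forall j, count (fun p => p.1 == j) P = nth 0 nu j.
  move=> j; case: (ltnP j m) => jm; last first.
    rewrite nth_default; last by lia.
    by apply/eqP; rewrite -leqn0 leqNgt -has_count; apply/hasP => -[p /memP1 /andP [p1 _] /eqP ep]; move: p1; rewrite ep ltnNge jm.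
  have e : count (fun A => (m - j)%N \notin A) s =
           size [seq Sfam m p.1 p.2 | p <- [seq p <- P | p.1 == j]].
    apply: (@count_mem_size _ s) => //.
      rewrite map_inj_in_uniq; first exact: filter_uniq.
      move=> u w hu hw; apply: injS; [exact: (mem_subseq (filter_subseq _ _) hu) | exact: (mem_subseq (filter_subseq _ _) hw)].
    move=> A; apply/andP/mapP => [[As nA] | [[j' t] ]].
      case: (struct A As) => [EB | [j' [t [jm' tv EA]]]].
        by move: nA; rewrite EB inB; lia.
      move: nA; rewrite EA inS => nA.
      have ej : j' = j by move: nA; lia.
      exists (j, t); last by rewrite ej.
      by rewrite mem_filter /= eqxx memP jm tv -ej -EA memF As.
    rewrite mem_filter memP /= => /andP [/eqP -> /and3P [_ _ SF]] ->.
    by split; [rewrite -memF | rewrite inS; lia].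
  rewrite -size_filter -(size_map (fun p : nat * nat => Sfam m p.1 p.2)) -e.
  have := count_predC (fun A => (m - j)%N \in A) s; rewrite sz H1 //.
  have := vle j; move=> h1 h2.
  have -> : count (fun A => (m - j)%N \notin A) s = count (predC (fun A => (m - j)%N \in A)) s by [].
  lia.
have cols : forall t, count (fun p => p.2 == t) P = count (fun x => t < x) nu.
  move=> t; case: (ltnP t v0) => tv; last first.
    have -> : count (fun x => t < x) nu = 0.
      apply/eqP; rewrite -leqn0 leqNgt -has_count; apply/hasP => -[x xs].
      have := all_le_head srt xs; rewrite -/v0; lia.
    by apply/eqP; rewrite -leqn0 leqNgt -has_count; apply/hasP => -[p /memP1 /andP [_ p2] /eqP ep]; move: p2; rewrite ep ltnNge tv.
  rewrite -H2 //.
  have e : count (fun A => (m.+1 + t)%N \in A) s =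
           size [seq Sfam m p.1 p.2 | p <- [seq p <- P | p.2 == t]].
    apply: (@count_mem_size _ s) => //.
      rewrite map_inj_in_uniq; first exact: filter_uniq.
      move=> u w hu hw; apply: injS; [exact: (mem_subseq (filter_subseq _ _) hu) | exact: (mem_subseq (filter_subseq _ _) hw)].
    move=> A; apply/andP/mapP => [[As nA] | [[j t'] ]].
      case: (struct A As) => [EB | [j [t' [jm tv' EA]]]].
        by move: nA; rewrite EB inB; lia.
      move: nA; rewrite EA inS => nA.
      have et : t' = t by move: nA; lia.
      exists (j, t); last by rewrite et.
      by rewrite mem_filter /= eqxx memP jm tv -et -EA memF As.
    rewrite mem_filter memP /= => /andP [/eqP -> /and3P [_ _ SF]] ->.
    by split; [rewrite -memF | rewrite inS eqxx].
  by rewrite e size_map size_filter.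
have Y := young srt uP rows cols.
have [cG _] := (G_ok n0 Hp km).
have sG : (F `<=` Gfam m nu)%fset.
  apply/fsubsetP => A AF; rewrite memG.
  case: (struct A AF) => [-> | [j [t [jm tv EA]]]]; first by rewrite inE eqxx.
  have : (j, t) \in P by rewrite memP jm tv -EA AF.
  rewrite Y => tj; rewrite /Gs inE; apply/orP; right; apply/mapP; exists (j, t) => //.
  by rewrite mem_Dnu // jm.
apply/eqP; rewrite eqEfcard sG /=.
have [cGn _] := cG.
by rewrite cGn cF.
Qed.



Local Open Scope fset_scope.

Theorem proposition5p2 (m n : nat) (nu : seq nat) :
  0 < n -> is_partition_of n.-1 nu -> size nu <= m ->
  exists! F : {fset {fset nat}}, family_of_shape m n F /\ has_type F (star m n nu).
Proof.
move=> hn hp hk; exists (Gfam m nu); split; first exact: (G_ok hn hp hk).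
by move=> F [h1 h2]; symmetry; apply: (G_uniq hn hp hk h1 h2).
Qed.
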